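(* Let $E_1$ and $E_2$ be vector lattices with the countable sup property. Consider $E_1\times E_2$ with either the coordinatewise order ($(x_1,y_1)\le(x_2,y_2)$ iff $x_1\le x_2$ and $y_1\le y_2$) or the lexicographic order ($(x_1,y_1)\preceq(x_2,y_2)$ iff $x_1<x_2$, or $x_1=x_2$ and $y_1\le y_2$). With respect to either order, $E_1\times E_2$ has the countable sup property, in the sense that whenever $(z_\alpha)$ is an increasing net with $0\le z_\alpha\uparrow z$ (i.e. $z$ is the supremum of the net), there is an increasing sequence of indices $(\alpha_n)$ with $0\le z_{\alpha_n}\uparrow z$.
   Context: A vector lattice $E$ has the countable sup property if for every net with $0\le x_\alpha\uparrow x$ in $E$ there is an increasing sequence of indices $\alpha_n$ with $0\le x_{\alpha_n}\uparrow x$ (equivalently, every nonempty subset possessing a supremum contains a countable subset with the same supremum). *)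

(* Defs.v *)
From HB Require Import structures.
From mathcomp Require Import all_boot all_order all_algebra.
From mathcomp Require Import reals.
Set Implicit Arguments.
Unset Strict Implicit.
Unset Printing Implicit Defensive.
Import Order.TTheory GRing.Theory Num.Theory.
Local Open Scope ring_scope.

Definition is_sup (T : Type) (le : T -> T -> Prop) (S : T -> Prop) (x : T) : Prop :=
  (forall y, S y -> le y x) /\ (forall u, (forall y, S y -> le y u) -> le x u).

Definition is_inf (T : Type) (le : T -> T -> Prop) (S : T -> Prop) (x : T) : Prop :=
  (forall y, S y -> le x y) /\ (forall u, (forall y, S y -> le u y) -> le u x).

Record is_vector_lattice (R : realType) (E : lmodType R) (le : E -> E -> Prop) : Prop := {
  vl_refl : forall x, le x x;
  vl_antisym : forall x y, le x y -> le y x -> x = y;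
  vl_trans : forall x y z, le x y -> le y z -> le x z;
  vl_add : forall x y z, le x y -> le (x + z) (y + z);
  vl_scale : forall (a : R) x y, 0 <= a -> le x y -> le (a *: x) (a *: y);
  vl_sup : forall x y, exists s, is_sup le (fun w => w = x \/ w = y) s;
  vl_inf : forall x y, exists i, is_inf le (fun w => w = x \/ w = y) i
}.

Definition directed (A : Type) (leA : A -> A -> Prop) : Prop :=
  inhabited A /\
  (forall a, leA a a) /\
  (forall a b c, leA a b -> leA b c -> leA a c) /\
  (forall a b, exists c, leA a c /\ leA b c).

Definition net_up (T A : Type) (le : T -> T -> Prop) (z0 : T)
  (leA : A -> A -> Prop) (z : A -> T) (x : T) : Prop :=
  (forall a, le z0 (z a)) /\
  (forall a b, leA a b -> le (z a) (z b)) /\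
  is_sup le (fun w => exists a, w = z a) x.

Definition countable_sup_property (T : Type) (le : T -> T -> Prop) (z0 : T) : Prop :=
  forall (A : Type) (leA : A -> A -> Prop) (z : A -> T) (x : T),
    directed leA -> net_up le z0 leA z x ->
    exists s : nat -> A,
      (forall n, leA (s n) (s n.+1)) /\
      net_up le z0 (fun m n : nat => (m <= n)%N) (fun n => z (s n)) x.

Definition coord_le (E1 E2 : Type) (le1 : E1 -> E1 -> Prop) (le2 : E2 -> E2 -> Prop)
  (p q : E1 * E2) : Prop := le1 p.1 q.1 /\ le2 p.2 q.2.

Definition lex_le (E1 E2 : Type) (le1 : E1 -> E1 -> Prop) (le2 : E2 -> E2 -> Prop)
  (p q : E1 * E2) : Prop :=
  (le1 p.1 q.1 /\ p.1 <> q.1) \/ (p.1 = q.1 /\ le2 p.2 q.2).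

(* Main.v *)
Require Import Defs.
From mathcomp Require Import all_boot all_order all_algebra.
From mathcomp Require Import reals.
From mathcomp Require Import lra.
From Stdlib Require Import ClassicalEpsilon Classical.
Import GRing.Theory Num.Theory.
Local Open Scope ring_scope.

Lemma seq_mono (A : Type) (leA : A -> A -> Prop) (s : nat -> A) :
  (forall a, leA a a) -> (forall a b c, leA a b -> leA b c -> leA a c) ->
  (forall n, leA (s n) (s n.+1)) -> forall m n, (m <= n)%N -> leA (s m) (s n).
Proof.
move=> refl tr st m n; elim: n => [|n IH].
  by rewrite leqn0 => /eqP ->.
rewrite leq_eqVlt => /orP [/eqP -> // | ]; rewrite ltnS => /IH h.
exact: tr h (st n).
Qed.

Fixpoint combseq {A : Type} (up : A -> A -> A) (s1 s2 : nat -> A) (n : nat) : A :=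
  match n with
  | 0 => up (s1 0%N) (s2 0%N)
  | n'.+1 => up (combseq up s1 s2 n') (up (s1 n) (s2 n))
  end.

Lemma le_subr {R : realType} {E : lmodType R} {le : E -> E -> Prop} :
  is_vector_lattice le -> forall x y c, le x y -> le (x - c) (y - c).
Proof. by move=> H x y c h; apply: vl_add. Qed.

Lemma le_addback {R : realType} {E : lmodType R} {le : E -> E -> Prop} :
  is_vector_lattice le -> forall x y c, le (x - c) (y - c) -> le x y.
Proof. by move=> H x y c h; have := vl_add H c h; rewrite !subrK. Qed.

Lemma le_sub0 {R : realType} {E : lmodType R} {le : E -> E -> Prop} :
  is_vector_lattice le -> forall x y, le x y -> le 0 (y - x).
Proof. by move=> H x y h; have := le_subr H _ _ x h; rewrite subrr. Qed.

Lemma coord_csp (R : realType) (E1 E2 : lmodType R)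
  (le1 : E1 -> E1 -> Prop) (le2 : E2 -> E2 -> Prop) :
  is_vector_lattice le1 -> is_vector_lattice le2 ->
  countable_sup_property le1 0 -> countable_sup_property le2 0 ->
  countable_sup_property (coord_le le1 le2) (0, 0).
Proof.
move=> H1 H2 C1 C2 A leA z [x y] dir [z0 [zmon [zub zlub]]].
have [[a0] [rA [tA uA]]] := dir.
have zub' a : coord_le le1 le2 (z a) (x,y) := zub _ (ex_intro _ a erefl).
have xsup : is_sup le1 (fun w => exists a, w = (z a).1) x.
  split; first by move=> w [a ->]; exact: (zub' a).1.
  move=> u ub; have := zlub (u, y); case => //.
  move=> q [a ->]; split; [exact: ub (ex_intro _ a erefl) | exact: (zub' a).2].
have ysup : is_sup le2 (fun w => exists a, w = (z a).2) y.
  split; first by move=> w [a ->]; exact: (zub' a).2.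
  move=> u ub; have := zlub (x, u); case => //.
  move=> q [a ->]; split; [exact: (zub' a).1 | exact: ub (ex_intro _ a erefl)].
have [s1 [s1inc [_ [_ [_ s1lub]]]]] := C1 A leA (fun a => (z a).1) x dir
  (conj (fun a => (z0 a).1) (conj (fun a b h => (zmon a b h).1) xsup)).
have [s2 [s2inc [_ [_ [_ s2lub]]]]] := C2 A leA (fun a => (z a).2) y dir
  (conj (fun a => (z0 a).2) (conj (fun a b h => (zmon a b h).2) ysup)).
pose up a b := proj1_sig (constructive_indefinite_description _ (uA a b)).
have upP a b : leA a (up a b) /\ leA b (up a b) :=
  proj2_sig (constructive_indefinite_description _ (uA a b)).
pose s := combseq up s1 s2.
have sP n : [/\ leA (s1 n) (s n), leA (s2 n) (s n) & leA (s n) (s n.+1)].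
  rewrite /s; case: n => [|n] /=.
    split; [exact: (upP _ _).1 | exact: (upP _ _).2 | exact: (upP _ _).1].
  split.
  - apply: tA (upP _ _).2; exact: (upP _ _).1.
  - apply: tA (upP _ _).2; exact: (upP _ _).2.
  - exact: (upP _ _).1.
exists s; split; first by move=> n; case: (sP n).
split; first by move=> n; apply: z0.
split.
  move=> m n mn; apply: zmon; apply: seq_mono => // k; by case: (sP k).
split; first by move=> w [n ->]; exact: zub'.
move=> [u v] ub; split.
- apply: s1lub => w [n ->] /=.
  have [h1 _ _] := sP n.
  apply: vl_trans H1 _ _ _ (zmon _ _ h1).1 _.
  exact: (ub _ (ex_intro _ n erefl)).1.
- apply: s2lub => w [n ->] /=.
  have [_ h1 _] := sP n.
  apply: vl_trans H2 _ _ _ (zmon _ _ h1).2 _.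
  exact: (ub _ (ex_intro _ n erefl)).2.
Qed.

Lemma lex_csp (R : realType) (E1 E2 : lmodType R)
  (le1 : E1 -> E1 -> Prop) (le2 : E2 -> E2 -> Prop) :
  is_vector_lattice le1 -> is_vector_lattice le2 ->
  countable_sup_property le1 0 -> countable_sup_property le2 0 ->
  countable_sup_property (lex_le le1 le2) (0, 0).
Proof.
move=> H1 H2 C1 C2 A leA z [x y] dir [z0 [zmon [zub zlub]]].
have [[a0] [rA [tA uA]]] := dir.
have fst_le : forall p q, lex_le le1 le2 p q -> le1 p.1 q.1.
  by move=> p q [[]//|[-> _]]; apply: (vl_refl H1).
have ltrans : forall p q r, lex_le le1 le2 p q -> lex_le le1 le2 q r ->
    lex_le le1 le2 p r.
  move=> p q r [[pq npq]|[epq pq]] [[qr nqr]|[eqr qr]].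
  - left; split; first exact: (vl_trans H1) pq qr.
    move=> epr; apply: npq; apply: (vl_antisym H1) pq _; by rewrite epr.
  - by left; split; rewrite -eqr.
  - by left; split; rewrite epq.
  - by right; split; [rewrite epq | exact: (vl_trans H2) pq qr].
have zub' : forall a, lex_le le1 le2 (z a) (x, y) :=
  fun a => zub _ (ex_intro _ a erefl).
have xsup : is_sup le1 (fun w => exists a, w = (z a).1) x.
  split; first by move=> w [a ->]; exact: fst_le (zub' a).
  move=> u ub.
  have [m [mlb mglb]] := vl_inf H1 u x.
  have mu : le1 m u := mlb u (or_introl erefl).
  have mx : le1 m x := mlb x (or_intror erefl).
  have mub : forall a, le1 (z a).1 m.
    move=> a; apply: mglb => w [->|->];
      [exact: ub (ex_intro _ a erefl) | exact: fst_le (zub' a)].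
  suff -> : x = m by [].
  apply: NNPP => xm.
  pose h := (2^-1 : R) *: (x - m).
  have h0 : le1 0 h.
    have hs : (0:R) <= 2^-1 by rewrite invr_ge0 ler0n.
    by have := vl_scale H1 hs (le_sub0 H1 _ _ mx); rewrite scaler0.
  have hne : h <> 0.
    move/eqP; rewrite scaler_eq0 invr_eq0 pnatr_eq0 /= subr_eq0 => /eqP.
    exact: xm.
  have mp : le1 m (m + h).
    by have := vl_add H1 m h0; rewrite add0r addrC.
  have pub : forall a, lex_le le1 le2 (z a) (m + h, 0).
    move=> a; left; split; first exact: (vl_trans H1) (mub a) mp.
    move=> /= e; apply: hne.
    have pm : m + h = m by apply: (vl_antisym H1) _ mp; rewrite -e.
    by have := congr1 (fun t => t - m) pm; rewrite subrr [m + h]addrC addrK.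
  have xp : le1 x (m + h).
    have hz : lex_le le1 le2 (x, y) (m + h, 0).
      by apply: zlub => w [a ->]; exact: pub.
    exact: fst_le hz.
  have := le_subr H1 _ _ m xp; rewrite [m + h]addrC addrK.
  have -> : x - m = h + h.
    rewrite /h -scalerDl.
    have -> : (2^-1 + 2^-1 : R) = 1.
      by lra.
    exact: esym (scale1r _).
  move=> hh; have := le_subr H1 _ _ h hh; rewrite addrK subrr => h1.
  by apply: hne; apply: (vl_antisym H1) h1 h0.
have fz0 : forall a, le1 0 (z a).1 := fun a => fst_le _ _ (z0 a).
have fmon : forall a b, leA a b -> le1 (z a).1 (z b).1 :=
  fun a b h => fst_le _ _ (zmon a b h).
case: (classic (exists b0, (z b0).1 = x)) => [[b0 hb0]|nex].
-
  have xb : forall b, leA b0 b -> (z b).1 = x.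
    move=> b hb; apply: (vl_antisym H1); first exact: fst_le (zub' b).
    by rewrite -{1}hb0; apply: fmon.
  have ymon : forall b c, leA b0 b -> leA b c -> le2 (z b).2 (z c).2.
    move=> b c hb hc; case: (zmon b c hc) => [[_ ne]|[_ //]].
    by exfalso; apply: ne; rewrite xb // xb //; apply: tA hb hc.
  have yub : forall b, leA b0 b -> le2 (z b).2 y.
    move=> b hb; case: (zub' b) => [[_ ne]|[_ //]].
    by exfalso; apply: ne; rewrite xb.
  pose B := {b : A | leA b0 b}.
  pose leB (b c : B) := leA (sval b) (sval c).
  pose w (b : B) := (z (sval b)).2 - (z b0).2.
  have dirB : directed leB.
    split; first exact: inhabits (exist _ b0 (rA b0)).
    split; first by move=> b; apply: rA.
    split; first by move=> a b c; apply: tA.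
    move=> [b hb] [c hc]; have [d [bd cd]] := uA b c.
    by exists (exist _ d (tA _ _ _ hb bd)); split.
  have nuw : net_up le2 0 leB w (y - (z b0).2).
    split; first by move=> [b hb]; apply: (le_sub0 H2); apply: ymon.
    split; first by move=> [b hb] [c hc] h; apply: (le_subr H2); apply: ymon.
    split; first by move=> v [[b hb] ->]; apply: (le_subr H2); apply: yub.
    move=> u ub.
    suff hy : le2 y (u + (z b0).2).
      by have := le_subr H2 _ _ (z b0).2 hy; rewrite addrK.
    have hz : lex_le le1 le2 (x, y) (x, u + (z b0).2).
      apply: zlub => q [a ->].
      have [c [ac b0c]] := uA a b0.
      apply: ltrans (zmon a c ac) _.
      right; split; first exact: xb c b0c.
      have := ub _ (ex_intro _ (exist _ c b0c) erefl) => hc.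
      by have := vl_add H2 (z b0).2 hc; rewrite /w /= subrK.
    by case: hz => [[_ ne]|[_ //]].
  have [t [tinc [_ [_ [_ tlub]]]]] := C2 B leB w (y - (z b0).2) dirB nuw.
  exists (fun n => sval (t n)); split; first exact: tinc.
  split; first by move=> n; apply: z0.
  split.
    move=> m n mn; apply: zmon; apply: (@seq_mono A leA (fun n => sval (t n))) => //.
  split; first by move=> q [n ->]; exact: zub'.
  move=> [u v] ub.
  have xu : le1 x u.
    have := fst_le _ _ (ub _ (ex_intro _ 0%N erefl)).
    by rewrite /= xb //; case: (t 0%N).
  case: (classic (x = u)) => [exu|nxu]; last by left.
  right; split => //=.
  suff hv : le2 (y - (z b0).2) (v - (z b0).2) by exact: le_addback H2 _ _ _ hv.
  apply: tlub => q [n ->]; rewrite /w.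
  apply: (le_subr H2).
  case: (ub _ (ex_intro _ n erefl)) => [[_ ne]|[_ //]].
  by exfalso; apply: ne; rewrite /= -exu xb //; case: (t n).
- have [s [sinc [_ [_ [_ slub]]]]] := C1 A leA (fun a => (z a).1) x dir
    (conj fz0 (conj fmon xsup)).
  exists s; split => //.
  split; first by move=> n; apply: z0.
  split; first by move=> m n mn; apply: zmon; exact: (@seq_mono A leA s).
  split; first by move=> q [n ->]; exact: zub'.
  move=> [u v] ub.
  have xu : le1 x u.
    apply: slub => q [n ->]; exact: fst_le _ _ (ub _ (ex_intro _ n erefl)).
  case: (classic (x = u)) => [exu|nxu]; last by left.
  right; split => //=.
  have hz : lex_le le1 le2 (x, y) (x, v).
    apply: zlub => q [a ->]; left; split; first exact: fst_le (zub' a).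
    by move=> e; apply: nex; exists a.
  by case: hz => [[_ ne]|[_ //]].
Qed.

Theorem proposition6p1 (R : realType) (E1 E2 : lmodType R)
  (le1 : E1 -> E1 -> Prop) (le2 : E2 -> E2 -> Prop) :
  is_vector_lattice le1 -> is_vector_lattice le2 ->
  countable_sup_property le1 0 -> countable_sup_property le2 0 ->
  countable_sup_property (coord_le le1 le2) (0, 0) /\
  countable_sup_property (lex_le le1 le2) (0, 0).
Proof.
move=> H1 H2 C1 C2; split; [exact: coord_csp | exact: lex_csp].
Qed.
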